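(* Let $\gamma>1$. There exist an integer $n_0(\gamma)$ and a constant $a(\gamma)>0$ such that for every $n\ge n_0(\gamma)$ the unique negative root $\lambda_n$ of $$g_n(\lambda)=\frac{1}{\lambda}+\frac{\frac{d}{d\lambda}h^{(1)}_n(-i\lambda)}{h^{(1)}_n(-i\lambda)}-\gamma=0$$ satisfies $$\Bigl|\lambda_n+\sqrt{\tfrac{n(n+1)}{\gamma^2-1}}\Bigr|\le a(\gamma).$$
   Context: $h^{(1)}_n$ is the spherical Hankel function of the first kind; for $\lambda<0$, $h^{(1)}_n(-i\lambda)=(-i)^n\frac{e^{\lambda}}{\lambda}R_n(-\frac{1}{2\lambda})$ (up to an $n$-independent constant) with $R_n(w)=\sum_{m=0}^n\frac{(n+m)!}{m!(n-m)!}w^m$; $\frac{d}{d\lambda}h^{(1)}_n(-i\lambda)$ is the derivative of $\lambda\mapsto h^{(1)}_n(-i\lambda)$. For $\gamma>1$ and $n\ge1$, $g_n$ has exactly one root in $(-\infty,0)$. *)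

(* Defs.v *)
From Stdlib Require Import Arith Reals Lra Lia.
Open Scope R_scope.

Definition Rpoly (n : nat) (w : R) : R :=
  sum_f_R0 (fun m => INR (fact (n + m)) / (INR (fact m) * INR (fact (n - m))) * w ^ m) n.

(* For lam < 0: h^{(1)}_n(-i lam) = C * (-i)^n * e^lam / lam * R_n(-1/(2 lam)),
   C an n-independent constant.  The nonzero factor C * (-i)^n does not depend on
   lam and cancels in the logarithmic derivative h'/h, so we use the real function
   below in its place. *)
Definition hankel_neg (n : nat) (lam : R) : R :=
  exp lam / lam * Rpoly n (- / (2 * lam)).

(* Main.v *)
Require Import Defs.
From Stdlib Require Import Reals Lra Lia Psatz.
From Coquelicot Require Import Coquelicot.
Open Scope R_scope.
Definition coef (n m : nat) : R :=
  INR (Factorial.fact (n + m)) / (INR (Factorial.fact m) * INR (Factorial.fact (n - m))).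

Lemma coef_rec n m : (m < n)%nat ->
  INR (S m) * coef n (S m) = coef n m * (INR (n + m + 1) * INR (n - m)).
Proof.
  intros H. destruct (Nat.le_exists_sub (S m) n H) as [k [Hk _]].
  subst n. unfold coef.
  replace (k + S m + S m)%nat with (S (k + S m + m)) by lia.
  replace (k + S m + m + 1)%nat with (S (k + S m + m)) by lia.
  replace (k + S m - S m)%nat with k by lia.
  replace (k + S m - m)%nat with (S k) by lia.
  change (Factorial.fact (S (k + S m + m))) with (S (k + S m + m) * Factorial.fact (k + S m + m))%nat.
  change (Factorial.fact (S m)) with (S m * Factorial.fact m)%nat.
  change (Factorial.fact (S k)) with (S k * Factorial.fact k)%nat.
  rewrite !mult_INR.
  pose proof (INR_fact_neq_0 m). pose proof (INR_fact_neq_0 k).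
  pose proof (INR_fact_neq_0 (k + S m + m)).
  assert (INR (S m) <> 0) by (apply not_0_INR; lia).
  assert (INR (S k) <> 0) by (apply not_0_INR; lia).
  field. repeat split; auto.
Qed.

Lemma coef_pos n m : 0 < coef n m.
Proof.
  unfold coef. apply Rdiv_lt_0_compat. apply INR_fact_lt_0.
  apply Rmult_lt_0_compat; apply INR_fact_lt_0.
Qed.

Lemma sum_lin (f0 f1 f2 f3 : nat -> R) a b c d k :
  sum_f_R0 (fun m => a * f0 m + b * f1 m + c * f2 m + d * f3 m) k =
  a * sum_f_R0 f0 k + b * sum_f_R0 f1 k + c * sum_f_R0 f2 k + d * sum_f_R0 f3 k.
Proof. induction k; simpl; [ring|rewrite IHk; ring]. Qed.

Section Mom.
Variables (n : nat) (w : R).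
Hypothesis Hn : (0 < n)%nat.

Definition t m := coef n m * w ^ m.
Definition q m := INR (n + m + 1) * INR (n - m).

Lemma shift (psi : nat -> R) :
  sum_f_R0 (fun m => INR m * t m * psi m) n =
  w * sum_f_R0 (fun m => q m * t m * psi (S m)) n.
Proof.
  assert (Hk : n = S (pred n)) by lia. set (k := pred n) in Hk.
  rewrite Hk at 1. rewrite decomp_sum by lia. simpl pred. rewrite Hk at 1.
  replace (sum_f_R0 (fun m => q m * t m * psi (S m)) (S k)) with
    (sum_f_R0 (fun m => q m * t m * psi (S m)) k) .
  2:{ simpl. unfold q. replace (n - S k)%nat with 0%nat by lia. simpl INR. ring. }
  rewrite scal_sum. simpl INR at 1. rewrite Rmult_0_l, Rmult_0_l, Rplus_0_l.
  apply sum_eq. intros i Hi. unfold t. rewrite <- Rmult_assoc.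
  replace (INR (S i) * coef (S k) (S i) * w ^ S i) with
    ((INR (S i) * coef (S k) (S i)) * w ^ S i) by ring.
  rewrite coef_rec by lia. unfold q. simpl pow. ring.
Qed.

Lemma q_eq m : (m <= n)%nat -> q m = INR n * INR (n + 1) - INR m - INR m ^ 2.
Proof. intros H. unfold q. rewrite minus_INR by lia. rewrite !plus_INR. simpl. ring. Qed.


Definition Sk k := sum_f_R0 (fun m => INR m ^ k * t m) n.
Definition NN := INR n * INR (n + 1).

Lemma lin_Sk a b c d (f : nat -> R) :
  (forall m, (m <= n)%nat -> f m = a * (INR m ^ 0 * t m) + b * (INR m ^ 1 * t m)
        + c * (INR m ^ 2 * t m) + d * (INR m ^ 3 * t m)) ->
  sum_f_R0 f n = a * Sk 0 + b * Sk 1 + c * Sk 2 + d * Sk 3.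
Proof.
  intros H. unfold Sk. rewrite <- sum_lin. apply sum_eq. exact H.
Qed.

Lemma E1 : Sk 1 = w * (NN * Sk 0 - Sk 1 - Sk 2).
Proof.
  pose proof (shift (fun _ => 1)) as H.
  rewrite (lin_Sk 0 1 0 0) in H by (intros; simpl; ring).
  rewrite (lin_Sk NN (-1) (-1) 0) in H.
  2:{ intros m Hm. rewrite q_eq by exact Hm. unfold NN. simpl; ring. }
  transitivity (0*Sk 0 + 1*Sk 1 + 0*Sk 2 + 0*Sk 3); [ring|]. rewrite H. ring.
Qed.

Lemma E2 : Sk 2 = w * (NN * Sk 0 + (NN - 1) * Sk 1 - 2 * Sk 2 - Sk 3).
Proof.
  pose proof (shift INR) as H.
  rewrite (lin_Sk 0 0 1 0) in H by (intros; simpl; ring).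
  rewrite (lin_Sk NN (NN-1) (-2) (-1)) in H.
  2:{ intros m Hm. rewrite q_eq by exact Hm. unfold NN. rewrite S_INR. simpl; ring. }
  transitivity (0*Sk 0 + 0*Sk 1 + 1*Sk 2 + 0*Sk 3); [ring|]. rewrite H. ring.
Qed.

Lemma t_pos m : 0 < w -> 0 < t m.
Proof. intros Hw. unfold t. apply Rmult_lt_0_compat. apply coef_pos. apply pow_lt, Hw. Qed.

Lemma I1 M : 0 < w -> 0 <= Sk 2 - 2 * M * Sk 1 + M ^ 2 * Sk 0.
Proof.
  intros Hw. replace (Sk 2 - 2 * M * Sk 1 + M ^ 2 * Sk 0) with
    (sum_f_R0 (fun m => (INR m - M)^2 * t m) n).
  2:{ rewrite (lin_Sk (M^2) (-2*M) 1 0) by (intros; simpl; ring). ring. }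
  apply cond_pos_sum. intros m. pose proof (t_pos m Hw).
  apply Rmult_le_pos; [apply pow2_ge_0|lra].
Qed.

Lemma I2 M : 0 < w -> 0 <= Sk 3 - 2 * M * Sk 2 + M ^ 2 * Sk 1.
Proof.
  intros Hw. replace (Sk 3 - 2 * M * Sk 2 + M ^ 2 * Sk 1) with
    (sum_f_R0 (fun m => INR m * ((INR m - M)^2 * t m)) n).
  2:{ rewrite (lin_Sk 0 (M^2) (-2*M) 1) by (intros; simpl; ring). ring. }
  apply cond_pos_sum. intros m. pose proof (t_pos m Hw).
  apply Rmult_le_pos; [apply pos_INR|apply Rmult_le_pos; [apply pow2_ge_0|lra]].
Qed.

Lemma sum_pos (f : nat -> R) k : (forall m, 0 < f m) -> 0 < sum_f_R0 f k.
Proof. intros H; induction k; simpl; [apply H|]. specialize (H (S k)); lra. Qed.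

Lemma S0_pos : 0 < w -> 0 < Sk 0.
Proof. intros Hw. apply sum_pos. intros m. simpl. pose proof (t_pos m Hw). lra. Qed.

End Mom.

Lemma alg (S0 S1 S2 S3 w c N: R): 0<S0 -> 0<w -> 0<c -> w*S1 = c*S0 ->
  S1 = w*(N*S0 - S1 - S2) -> S2 = w*(N*S0 + (N-1)*S1 - 2*S2 - S3) ->
  (forall M, 0 <= S2 - 2*M*S1 + M^2*S0) -> (forall M, 0 <= S3 - 2*M*S2 + M^2*S1) ->
  0 < S1/S0 /\ (1+c)*(S1/S0)^2 + c*(S1/S0) <= c*N /\
  c*N <= (1+c)*(S1/S0)^2 + c*(1+/(1+c))*(S1/S0).
Proof.
  intros H0 Hw Hc Hr E1 E2 I1 I2.
  set (M := S1/S0). set (m2 := S2/S0). set (m3 := S3/S0).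
  assert (e1 : S1 = M*S0) by (unfold M; field; lra).
  assert (e2 : S2 = m2*S0) by (unfold m2; field; lra).
  assert (e3 : S3 = m3*S0) by (unfold m3; field; lra).
  rewrite e1, e2, e3 in *.
  assert (Hr' : w*M = c) by (apply (Rmult_eq_reg_r S0); lra).
  assert (F1 : M = w*(N - M - m2)) by (apply (Rmult_eq_reg_r S0); [|lra]; rewrite E1 at 1; ring).
  assert (F2 : m2 = w*(N + (N-1)*M - 2*m2 - m3)) by (apply (Rmult_eq_reg_r S0); [|lra]; rewrite E2 at 1; ring).
  specialize (I1 M). specialize (I2 M).
  assert (J1 : 0 <= m2 - M^2).
  { assert (0 <= (m2 - M^2) * S0) by (replace ((m2 - M^2)*S0) with (m2*S0 - 2*M*(M*S0) + M^2*S0) by ring; lra).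
    nra. }
  assert (J2 : 0 <= m3 - 2*M*m2 + M^3).
  { assert (0 <= (m3 - 2*M*m2 + M^3) * S0) by (replace ((m3 - 2*M*m2 + M^3)*S0) with (m3*S0 - 2*M*(m2*S0) + M^2*(M*S0)) by ring; lra).
    nra. }
  assert (HM : 0 < M) by nra.
  assert (G1 : M^2 = c*(N - M - m2)) by (rewrite <- Hr'; transitivity (M * (w*(N-M-m2))); [rewrite <- F1; ring | ring]).
  assert (G2 : M*m2 = c*(N + (N-1)*M - 2*m2 - m3)) by (rewrite <- Hr'; transitivity (M * (w*(N + (N-1)*M - 2*m2 - m3))); [rewrite <- F2; ring | ring]).
  split; [exact HM|]. split; [nra|].
  set (V := m2 - M^2).
  assert (K : V*(M + c + c*M) <= M^2).
  { unfold V. nra. }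
  assert (K2 : V*(1+c) <= M).
  { assert (V*(1+c)*M <= M*M) by nra. nra. }
  assert (K3 : V <= M/(1+c)). { apply (Rmult_le_reg_r (1+c)); [lra|]. unfold Rdiv. rewrite Rmult_assoc, Rinv_l by lra. lra. }
  replace (c*(1+/(1+c))*M) with (c*M + c*(M/(1+c))) by (field; lra).
  unfold V in K3. nra.
Qed.

Lemma fin (M c N lam gamma : R) : 0<c -> 0<M -> gamma = 2*c+1 -> lam = -(M/(2*c)) ->
  (1+c)*M^2 + c*M <= c*N -> c*N <= (1+c)*M^2 + c*(1+/(1+c))*M ->
  Rabs (lam + sqrt (N/(gamma^2-1))) <= 1.
Proof.
  intros Hc HM Hg Hl U L.
  set (u := M/(2*c)). assert (Mu : M = 2*c*u) by (unfold u; field; lra).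
  assert (Hu : 0 < u) by (unfold u; apply Rdiv_lt_0_compat; lra).
  set (X := N/(gamma^2-1)).
  assert (HX : N = 4*c*(1+c)*X) by (unfold X; rewrite Hg; field; nra).
  rewrite Mu, HX in U, L.
  assert (Uu : u^2 <= X).
  { assert (4*c*(1+c)*(u^2 - X) <= 0) by nra.
    assert (0 < 4*c*(1+c)) by nra. nra. }
  assert (Lu : X - u^2 <= u).
  { replace (c*(1+/(1+c))*(2*c*u)) with (c*(2*c*u*(2+c)/(1+c))) in L by (field; intro; lra).
    set (T := 2*c*u*(2+c)/(1+c)) in *.
    assert (c*(4*c*(1+c)*(X - u^2)) <= c*T) by nra.
    assert (4*c*(1+c)*(X - u^2) <= T) by (apply (Rmult_le_reg_l c); lra).
    assert (T <= 4*c*(1+c)*u). unfold T.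
    { apply (Rmult_le_reg_r (1+c)); [lra|]. unfold Rdiv. rewrite Rmult_assoc, Rinv_l by lra. nra. }
    assert (0 < 4*c*(1+c)) by nra. nra. }
  assert (HX0 : 0 <= X) by nra.
  set (s := sqrt X). assert (Hs : s*s = X) by (apply sqrt_sqrt; lra).
  assert (Hs0 : 0 <= s) by apply sqrt_pos.
  assert (us : u <= s) by nra.
  assert (su : s - u <= 1) by nra.
  rewrite Hl. fold u. fold s. rewrite Rabs_right; lra.
Qed.

Lemma deriv_sum (b : nat -> R) (k : nat) (w : R) :
  is_derive (fun x => sum_f_R0 (fun m => b m * x ^ m) k) w
    (sum_f_R0 (fun m => b m * (INR m * w ^ pred m)) k).
Proof.
  induction k as [|k IH]; simpl.
  - apply (is_derive_ext (fun x => b 0%nat * 1)). { intros; simpl; ring. }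
    auto_derive; [auto|ring].
  - apply (is_derive_plus (V:=R_NormedModule)) ; [exact IH|].
    apply (is_derive_ext (fun x => b (S k) * x ^ (S k))). { intros; reflexivity. }
    replace (b (S k) * ((match k with | 0 => 1 | S _ => INR k + 1 end) * w ^ k))
      with (b (S k) * (INR (S k) * 1 * w ^ pred (S k))).
    2:{ simpl. rewrite <- S_INR. ring. }
    auto_derive; [auto|]. simpl; ring.
Qed.

Definition Rpolyd n w := sum_f_R0 (fun m => coef n m * (INR m * w ^ pred m)) n.

Lemma deriv_Rpoly n w : is_derive (Rpoly n) w (Rpolyd n w).
Proof. apply (deriv_sum (coef n) n w). Qed.

Lemma deriv_hankel n lam : lam < 0 ->
  derivable_pt_lim (hankel_neg n) lam
   ((exp lam / lam - exp lam / lam ^ 2) * Rpoly n (- / (2 * lam))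
    + exp lam / lam * (/ (2 * lam ^ 2) * Rpolyd n (- / (2 * lam)))).
Proof.
  intros Hl. apply is_derive_Reals. unfold hankel_neg.
  apply (is_derive_ext (fun x => mult (exp x / x) (Rpoly n (- / (2 * x))))).
  { intros; reflexivity. }
  set (D := _ + _).
  assert (H1 : is_derive (fun x => exp x / x) lam (exp lam / lam - exp lam / lam ^ 2)).
  { auto_derive. lra. field. lra. }
  assert (H2 : is_derive (fun x => Rpoly n (- / (2 * x))) lam
                 (scal (/ (2 * lam ^ 2)) (Rpolyd n (- / (2 * lam))))).
  { apply (is_derive_comp (Rpoly n) (fun x => - / (2 * x))).
    apply deriv_Rpoly. auto_derive. lra. field. lra. }
  pose proof (is_derive_mult _ _ _ _ _ H1 H2 Rmult_comm) as H.
  unfold D. revert H. unfold mult, plus, scal; simpl. unfold mult; simpl.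
  intro H. exact H.
Qed.


Theorem lemma4p1 (gamma : R) (hgamma : 1 < gamma) :
  exists (n0 : nat) (a : R), 0 < a /\
    forall (n : nat) (lam dH : R),
      (n0 <= n)%nat ->
      lam < 0 ->
      derivable_pt_lim (hankel_neg n) lam dH ->
      / lam + dH / hankel_neg n lam - gamma = 0 ->
      Rabs (lam + sqrt (INR n * INR (n + 1) / (gamma ^ 2 - 1))) <= a.
Proof.
  exists 1%nat, 1. split; [lra|].
  intros n lam dH Hn Hl Hd Heq.
  set (c := (gamma - 1) / 2).
  assert (Hc : 0 < c) by (unfold c; lra).
  set (w := - / (2 * lam)).
  assert (Hw : 0 < w).
  { unfold w. assert (/ (2 * lam) < 0) by (apply Rinv_lt_0_compat; lra). lra. }
  pose proof (deriv_hankel n lam Hl) as HD.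
  pose proof (uniqueness_limite _ _ _ _ Hd HD) as ->.
  fold w in Heq.
  assert (HP : Rpoly n w = Sk n w 0).
  { unfold Rpoly, Sk, t, coef. apply sum_eq. intros; simpl; ring. }
  assert (HPd : w * Rpolyd n w = Sk n w 1).
  { unfold Rpolyd, Sk, t.
    transitivity (sum_f_R0 (fun m => coef n m * (INR m * w ^ pred m) * w) n).
    { rewrite scal_sum. ring. }
    apply sum_eq. intros [|j] _; simpl; ring. }
  assert (H0 : 0 < Sk n w 0) by (apply S0_pos; exact Hw).
  assert (Hex : 0 < exp lam) by apply exp_pos.
  set (E := exp lam / lam) in *.
  assert (HE : E <> 0) by (unfold E; apply Rmult_integral_contrapositive; split;
           [lra | apply Rinv_neq_0_compat; lra]).
  unfold hankel_neg in Heq. fold E w in Heq. rewrite HP in Heq.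
  set (Pd := Rpolyd n w) in *.
  set (P0 := Sk n w 0) in *.
  assert (Hel : exp lam / lam ^ 2 = E * / lam) by (unfold E; field; lra).
  rewrite Hel in Heq.
  set (Y := / (2 * lam ^ 2) * Pd) in *.
  assert (HY : Y = (gamma - 1) * P0).
  { assert (Hne : E * P0 <> 0) by (apply Rmult_integral_contrapositive; split; [exact HE | apply Rgt_not_eq; lra]).
    assert (K : ((E - E * / lam) * P0 + E * Y) = (gamma - / lam) * (E * P0)).
    { apply (Rmult_eq_reg_r (/ (E * P0))).
      2:{ apply Rinv_neq_0_compat; exact Hne. }
      transitivity (((E - E * / lam) * P0 + E * Y) / (E * P0)); [reflexivity|].
      assert (Hq : ((E - E * / lam) * P0 + E * Y) / (E * P0) = gamma - / lam) by lra.
      rewrite Hq. field. split; [apply Rgt_not_eq; lra|split; [exact HE|apply Rlt_not_eq; lra]]. }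
    apply (Rmult_eq_reg_l E); [|exact HE].
    assert (K2 : E * Y - E * ((gamma - 1) * P0) =
      ((E - E * / lam) * P0 + E * Y) - (gamma - / lam) * (E * P0)) by ring.
    lra. }
  assert (Hww : w * w = / (2 * lam ^ 2) * / 2) by (unfold w; field; lra).
  assert (Hroot : w * Sk n w 1 = c * Sk n w 0).
  { rewrite <- HPd. fold P0. replace (w * (w * Pd)) with ((w * w) * Pd) by ring.
    rewrite Hww. replace (/ (2 * lam ^ 2) * / 2 * Pd) with (/2 * Y) by (unfold Y; ring).
    rewrite HY. unfold c. field. }
  assert (Hn0 : (0 < n)%nat) by lia.
  destruct (alg (Sk n w 0) (Sk n w 1) (Sk n w 2) (Sk n w 3) w c (NN n)
              H0 Hw Hc Hroot (E1 n w Hn0) (E2 n w Hn0) (fun M => I1 n w M Hw) (fun M => I2 n w M Hw))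
    as [HM [U L]].
  apply (fin (Sk n w 1 / Sk n w 0) c (NN n) lam gamma Hc HM); try assumption.
  - unfold c; field.
  - assert (Hlw : lam = - / (2 * w)) by (unfold w; field; lra).
    rewrite Hlw. apply f_equal.
    assert (Hs1 : Sk n w 1 = c * Sk n w 0 / w) by (rewrite <- Hroot; field; lra).
    rewrite Hs1. field. repeat split; apply Rgt_not_eq; [lra | exact H0 | lra].
Qed.
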